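(* Let $\mathbb{K}$ be a field, $S=\mathbb{K}[x_1,\ldots,x_n]$, and let $I\subseteq S$ be a support-$2$ monomial ideal whose irreducible decomposition is minimal. If $\alpha_{i,j}\geq 2$ for some $1\le i,j\le n$, then $I^{(2)}\neq I^2$.
   Context: For a monomial ideal $I$, $\mathcal{G}(I)$ denotes its minimal set of monomial generators. $I$ is a support-$2$ monomial ideal if $\mathcal{G}(I)\subseteq\{x_i^ax_j^b : 1\le i<j\le n,\ a,b\ge 1\}$. For $i\neq j$, $\alpha_{i,j}$ is the number of elements of $\mathcal{G}(I)$ whose support is exactly $\{x_i,x_j\}$. Symbolic power: $I^{(s)}=\bigcap_{P\in\mathrm{MinAss}(I)}(I^sS_P\cap S)$ over the minimal primes of $I$. Irreducible monomial ideals are those generated by pure powers of variables; every monomial ideal has a unique irredundant decomposition $I=\bigcap Q_i$ into irreducible monomial ideals, called minimal if $\sqrt{Q_i}\ne\sqrt{Q_j}$ for $i\neq j$. *)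

(* Defs.v *)
From mathcomp Require Import all_boot all_algebra.
From mathcomp Require Export mpoly.
Set Implicit Arguments. Unset Strict Implicit. Unset Printing Implicit Defensive.
Import GRing.Theory.
Local Open Scope ring_scope.

Section Ideals.
Variables (K : fieldType) (n : nat).
Local Notation S := {mpoly K[n]}.

Definition ideal_eq (I J : S -> Prop) : Prop := forall f, I f <-> J f.

Definition ideal_gen (A : S -> Prop) : S -> Prop :=
  fun f => exists s : seq (S * S),
    (forall p, p \in s -> A p.2) /\ f = \sum_(p <- s) p.1 * p.2.

Definition is_ideal (I : S -> Prop) : Prop :=
  I 0 /\ (forall f g, I f -> I g -> I (f + g)) /\ (forall a f, I f -> I (a * f)).

Definition ideal_pow (I : S -> Prop) (s : nat) : S -> Prop :=
  ideal_gen (fun g => exists l : seq S,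
    size l = s /\ (forall a, a \in l -> I a) /\ g = \prod_(a <- l) a).

Definition is_prime (P : S -> Prop) : Prop :=
  is_ideal P /\ ~ P 1 /\ (forall f g, P (f * g) -> P f \/ P g).

Definition is_min_prime (I P : S -> Prop) : Prop :=
  is_prime P /\ (forall f, I f -> P f) /\
  (forall Q, is_prime Q -> (forall f, I f -> Q f) -> (forall f, Q f -> P f) ->
     ideal_eq Q P).

(* Symbolic power: I^(s) = \bigcap_{P in MinAss(I)} (I^s S_P \cap S);
   f lies in I^s S_P \cap S iff g f \in I^s for some g \notin P. *)
Definition symbolic_pow (I : S -> Prop) (s : nat) : S -> Prop :=
  fun f => forall P, is_min_prime I P ->
    exists g, ~ P g /\ ideal_pow I s (g * f).

Definition radical (I : S -> Prop) : S -> Prop :=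
  fun f => exists k : nat, I (f ^+ k).

Definition monom (m : 'X_{1..n}) : S := 'X_[m].

Definition mdivides (m m' : 'X_{1..n}) : bool := [forall i, (m i <= m' i)%N].

Definition monomial_ideal_of (G : seq 'X_{1..n}) : S -> Prop :=
  ideal_gen (fun g => exists2 m, m \in G & g = monom m).

Definition is_min_mon_gens (I : S -> Prop) (G : seq 'X_{1..n}) : Prop :=
  uniq G /\ ideal_eq I (monomial_ideal_of G) /\
  (forall m m', m \in G -> m' \in G -> m != m' -> ~~ mdivides m m').

Definition support2 (G : seq 'X_{1..n}) : Prop :=
  forall m, m \in G -> exists i j : 'I_n,
    (i < j)%N /\ (0 < m i)%N /\ (0 < m j)%N /\
    (forall k, k != i -> k != j -> m k = 0%N).

Definition alpha (G : seq 'X_{1..n}) (i j : 'I_n) : nat :=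
  count (fun m : 'X_{1..n} => [forall k, (m k != 0%N) == ((k == i) || (k == j))]) G.

(* Irreducible monomial ideal given by exponents e: generated by the pure
   powers x_i^(e i) for those i with e i > 0 (e = 0 gives the zero ideal). *)
Definition irred_ideal (e : 'I_n -> nat) : S -> Prop :=
  ideal_gen (fun g => exists2 i : 'I_n, (0 < e i)%N & g = 'X_i ^+ e i).

(* I = \bigcap Q_k is an irredundant irreducible decomposition whose
   components have pairwise distinct radicals (a "minimal" decomposition). *)
Definition minimal_irred_decomp (I : S -> Prop) (Qs : seq ('I_n -> nat)) : Prop :=
  ideal_eq I (fun f => forall k, (k < size Qs)%N -> irred_ideal (nth (fun _ => 0%N) Qs k) f) /\
  (forall k, (k < size Qs)%N -> ~ ideal_eq I
     (fun f => forall l, (l < size Qs)%N -> l != k ->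
        irred_ideal (nth (fun _ => 0%N) Qs l) f)) /\
  (forall k l, (k < size Qs)%N -> (l < size Qs)%N -> k != l ->
     ~ ideal_eq (radical (irred_ideal (nth (fun _ => 0%N) Qs k)))
                (radical (irred_ideal (nth (fun _ => 0%N) Qs l)))).

End Ideals.

(* Main.v *)
Require Import Defs.
From mathcomp Require Import all_boot all_algebra.
From mathcomp Require Import mpoly.
From mathcomp Require Import zify.
From Stdlib Require Import Classical.
Set Implicit Arguments. Unset Strict Implicit. Unset Printing Implicit Defensive.
Import GRing.Theory.
Local Open Scope ring_scope.
Section A.
Variables (K : fieldType) (n : nat).
Local Notation S := {mpoly K[n]}.
Implicit Types (J : S -> Prop) (A : S -> Prop).

Lemma gen_ideal A : is_ideal (ideal_gen A).
Proof.
split; [|split].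
- by exists [::]; rewrite big_nil.
- move=> f g [s [Hs ->]] [t [Ht ->]]; exists (s ++ t); split; last by rewrite big_cat.
  by move=> p; rewrite mem_cat => /orP [/Hs|/Ht].
- move=> a f [s [Hs ->]]; exists [seq (a * p.1, p.2) | p <- s]; split.
  + by move=> p /mapP [q /Hs Hq ->].
  + by rewrite big_map mulr_sumr; apply: eq_bigr => p _; rewrite mulrA.
Qed.

Lemma gen_in A f : A f -> ideal_gen A f.
Proof.
move=> Af; exists [:: (1, f)]; split; first by move=> p; rewrite inE => /eqP ->.
by rewrite big_seq1 mul1r.
Qed.

Lemma gen_min A J : is_ideal J -> (forall f, A f -> J f) -> forall f, ideal_gen A f -> J f.
Proof.
move=> [J0 [JD JM]] HA f [s [Hs ->]]; elim: s Hs => [|p s IH] Hs; first by rewrite big_nil.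
rewrite big_cons; apply: JD; first by apply: JM; apply: HA; apply: Hs; rewrite inE eqxx.
by apply: IH => q Hq; apply: Hs; rewrite inE Hq orbT.
Qed.

Lemma ideal_eq_ideal J1 J2 : ideal_eq J1 J2 -> is_ideal J2 -> is_ideal J1.
Proof.
move=> E [J0 [JD JM]]; split; [|split].
- by apply/E.
- by move=> f g /E Hf /E Hg; apply/E; apply: JD.
- by move=> a f /E Hf; apply/E; apply: JM.
Qed.

Lemma idealMr J a f : is_ideal J -> J f -> J (f * a).
Proof. by move=> [_ [_ JM]] Hf; rewrite mulrC; apply: JM. Qed.

Lemma idealM J a f : is_ideal J -> J f -> J (a * f).
Proof. by move=> [_ [_ JM]] Hf; apply: JM. Qed.

Lemma idealD J f g : is_ideal J -> J f -> J g -> J (f + g).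
Proof. by move=> [_ [JD _]]; apply: JD. Qed.

Lemma ideal0 J : is_ideal J -> J 0.
Proof. by case. Qed.

Lemma ideal_sum J (I : eqType) (r : seq I) (F : I -> S) :
  is_ideal J -> (forall x, x \in r -> J (F x)) -> J (\sum_(x <- r) F x).
Proof.
move=> HJ; elim: r => [|x r IH] H; first by rewrite big_nil; apply: ideal0.
rewrite big_cons; apply: idealD => //; first by apply: H; rewrite inE eqxx.
by apply: IH => y Hy; apply: H; rewrite inE Hy orbT.
Qed.
Lemma ideal_sumT J (I : finType) (F : I -> S) :
  is_ideal J -> (forall x, J (F x)) -> J (\sum_x F x).
Proof. by move=> HJ H; rewrite -big_enum; apply: ideal_sum. Qed.

Lemma idealMn J f k : is_ideal J -> J f -> J (f *+ k).
Proof. by move=> HJ Hf; rewrite -mulr_natl; apply: idealM. Qed.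

Lemma idealZ J c f : is_ideal J -> J f -> J (c *: f).
Proof. by move=> HJ Hf; rewrite -mul_mpolyC; apply: idealM. Qed.

Lemma rad_gen A J : is_ideal J -> (forall a, A a -> exists k, J (a ^+ k)) ->
  forall f, ideal_gen A f -> exists k, J (f ^+ k).
Proof.
move=> HJ HA f [s [Hs ->]]; elim: s Hs => [|p s IH] Hs.
  by exists 1%N; rewrite big_nil expr1; apply: ideal0.
have [k1 Hk1] : exists k, J ((p.1 * p.2) ^+ k).
  have [k Hk] := HA _ (Hs p (mem_head _ _)); exists k.
  by rewrite exprMn; apply: idealM.
have [k2 Hk2] := IH (fun q Hq => Hs q (@mem_behead _ (p :: s) q Hq)).
exists (k1 + k2)%N; rewrite big_cons exprDn; apply: ideal_sumT => // i.
apply: idealMn => //.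
case: (leqP k2 i) => Hi.
  set y := \sum_(_ <- _) _.
  have -> : y ^+ i = y ^+ (i - k2) * y ^+ k2 by rewrite -exprD subnK.
  by rewrite mulrA; apply: idealM.
have -> : (k1 + k2 - i = (k1 + k2 - i - k1) + k1)%N by lia.
by rewrite exprD; apply: (idealMr _ HJ); apply: (idealM _ HJ).
Qed.
Definition sig (E : 'I_n -> bool) (p : S) : S :=
  mmap (@mpolyC n K) (fun l => if E l then 0 else 'X_l) p.
Definition avoid (E : 'I_n -> bool) (m : 'X_{1..n}) := [forall l, E l ==> (m l == 0%N)].

Lemma sigX E m : sig E 'X_[m] = if avoid E m then 'X_[m] else 0.
Proof.
rewrite /sig mmapX /mmap1; case: ifP => Hav.
- rewrite [RHS]mpolyXE_id; apply: eq_bigr => i _.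
  move/forallP: Hav => /(_ i); case: (E i) => //= /eqP ->; by rewrite !expr0.
- move/negbT: Hav; rewrite negb_forall => /existsP [l]; rewrite negb_imply => /andP [El Hl].
  rewrite (bigD1 l) //= El expr0n (negbTE Hl) mul0r //.
Qed.

Lemma sigZ E c p : sig E (c *: p) = c *: sig E p.
Proof. by rewrite /sig mmapZ mul_mpolyC. Qed.

Lemma sigB E p q : sig E (p - q) = sig E p - sig E q.
Proof. by rewrite /sig mmapB. Qed.

Lemma sig_sum E (r : seq 'X_{1..n}) (F : 'X_{1..n} -> S) :
  sig E (\sum_(m <- r) F m) = \sum_(m <- r) sig E (F m).
Proof.
elim: r => [|x r IH]; first by rewrite !big_nil /sig mmap0.
by rewrite !big_cons /sig mmapD -IH.
Qed.

Lemma sigM E p q : sig E (p * q) = sig E p * sig E q.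
Proof. rewrite /sig. exact: rmorphM. Qed.
Lemma sig1 E : sig E 1 = 1.
Proof. rewrite /sig. exact: rmorph1. Qed.
Lemma sig0 E : sig E 0 = 0.
Proof. by rewrite /sig mmap0. Qed.

Definition kerE E : S -> Prop := fun f => sig E f = 0.
Definition varsE (E : 'I_n -> bool) : S -> Prop := ideal_gen (fun g => exists2 l, E l & g = 'X_l).

Lemma X_neq0 m : ('X_[m] : S) != 0.
Proof. by rewrite -msupp_eq0 msuppX. Qed.

Lemma ker_vars E f : kerE E f -> varsE E f.
Proof.
rewrite /kerE => Hf.
have -> : f = f - sig E f by rewrite Hf subr0.
rewrite {1 2}[f]mpolyE sig_sum -sumrB.
apply: ideal_sum; first exact: gen_ideal.
move=> m _; rewrite sigZ -scalerBr; apply: idealZ; first exact: gen_ideal.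
rewrite sigX; case: ifP => Hav; first by rewrite subrr; apply: ideal0; apply: gen_ideal.
rewrite subr0; move/negbT: Hav; rewrite negb_forall => /existsP [l].
rewrite negb_imply => /andP [El Hl].
have Hle : (U_(l) <= m)%MM by rewrite lep1mP.
rewrite -(submK Hle) mpolyXD; apply: idealM; first exact: gen_ideal.
by apply: gen_in; exists l.
Qed.

Lemma kerE_ideal (E : 'I_n -> bool) : is_ideal (kerE E).
Proof.
rewrite /kerE; split; [|split].
- exact: sig0.
- by move=> f g Hf Hg; rewrite /sig mmapD -/(sig E f) -/(sig E g) Hf Hg addr0.
- by move=> a f Hf; rewrite sigM Hf mulr0.
Qed.

Lemma vars_ker E f : varsE E f -> kerE E f.
Proof.
apply: gen_min; first exact: kerE_ideal.
move=> g [l El ->]; rewrite /kerE sigX; case: ifP => // /forallP /(_ l).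
by rewrite El /= mnm1E eqxx.
Qed.

Lemma kerE_prime (E : 'I_n -> bool) : is_prime (kerE E).
Proof.
split; first exact: kerE_ideal.
split; first by rewrite /kerE sig1; apply/eqP; exact: oner_neq0.
move=> f g; rewrite /kerE sigM => /eqP; rewrite mulf_eq0 => /orP [/eqP|/eqP]; by [left|right].
Qed.

Lemma kerX E m : kerE E 'X_[m] -> ~~ avoid E m.
Proof. by rewrite /kerE sigX; case: ifP => // _ /eqP; rewrite (negbTE (X_neq0 m)). Qed.

Lemma prime_pow (P : S -> Prop) f k : is_prime P -> P (f ^+ k) -> P f.
Proof.
move=> [[P0 [PD PM]] [P1 Pp]]; elim: k => [|k IH]; first by rewrite expr0.
by rewrite exprS => /Pp [] // /IH.
Qed.


Definition Dset (Sm : 'X_{1..n} -> Prop) : S -> Prop :=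
  fun f => forall m, m \in msupp f -> exists2 m', Sm m' & (m' <= m)%MM.

Lemma Dset_ideal Sm : is_ideal (Dset Sm).
Proof.
split; [|split].
- by move=> m; rewrite msupp0.
- move=> f g Hf Hg m /msuppD_le; rewrite mem_cat => /orP [/Hf|/Hg] //.
- move=> a f Hf m /msuppM_le /allpairsP [[m1 m2] /= [_ H2 ->]].
  have [m' Hm' Hle] := Hf _ H2; exists m' => //.
  exact: lepm_trans Hle (lem_addl _ _).
Qed.

Lemma DsetX Sm m : Sm m -> Dset Sm 'X_[m].
Proof. by move=> Hm m'; rewrite msuppX inE => /eqP ->; exists m => //; apply: lepm_refl. Qed.

Lemma DsetX_inv Sm m : Dset Sm 'X_[m] -> exists2 m', Sm m' & (m' <= m)%MM.
Proof. by move=> H; apply: H; rewrite msuppX mem_head. Qed.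

Lemma DsetM S1 S2 a b : Dset S1 a -> Dset S2 b ->
  Dset (fun m => exists m1 m2, [/\ S1 m1, S2 m2 & m = (m1 + m2)%MM]) (a * b).
Proof.
move=> Ha Hb m /msuppM_le /allpairsP [[m1 m2] /= [H1 H2 ->]].
have [m1' ? ?] := Ha _ H1; have [m2' ? ?] := Hb _ H2.
exists (m1' + m2')%MM; first by exists m1', m2'.
by apply/mnm_lepP => k; rewrite !mnmDE; apply: leq_add; apply/mnm_lepP.
Qed.

Lemma monX_in J m' m : is_ideal J -> J 'X_[m'] -> (m' <= m)%MM -> J 'X_[m].
Proof. by move=> HJ H Hle; rewrite -(submK Hle) mpolyXD; apply: idealM. Qed.

Lemma irred_D (e : 'I_n -> nat) f : irred_ideal e f ->
  Dset (fun m' => exists2 l, (0 < e l)%N & m' = (U_(l) *+ e l)%MM) f.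
Proof.
apply: gen_min; first exact: Dset_ideal.
by move=> g [l Hl ->]; rewrite mpolyXn; apply: DsetX; exists l.
Qed.

Lemma irred_memX (e : 'I_n -> nat) m : irred_ideal e ('X_[m] : S) ->
  exists2 l, (0 < e l)%N & (e l <= m l)%N.
Proof.
move/irred_D/DsetX_inv => [m' [l Hl ->] /mnm_lepP /(_ l)].
by rewrite mulmnE mnm1E eqxx mul1n => H; exists l.
Qed.

Lemma irred_ideal_is (e : 'I_n -> nat) : is_ideal (@irred_ideal K n e).
Proof. exact: gen_ideal. Qed.

Lemma irred_gen (e : 'I_n -> nat) l : (0 < e l)%N -> irred_ideal e ('X_[U_(l) *+ e l] : S).
Proof. by move=> Hl; apply: gen_in; exists l => //; rewrite mpolyXn. Qed.

Lemma mono_D (G : seq 'X_{1..n}) f : monomial_ideal_of G f -> Dset (fun m => m \in G) f.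
Proof.
apply: gen_min; first exact: Dset_ideal.
by move=> g [m Hm ->]; apply: DsetX.
Qed.

Lemma pow2_D (I : S -> Prop) (G : seq 'X_{1..n}) f :
  ideal_eq I (monomial_ideal_of G) -> ideal_pow I 2 f ->
  Dset (fun m => exists m1 m2, [/\ m1 \in G, m2 \in G & m = (m1 + m2)%MM]) f.
Proof.
move=> HI; apply: gen_min; first exact: Dset_ideal.
move=> g [[|a [|b [|c l]]] [//= Hs [Hl ->]]].
rewrite big_cons big_seq1; apply: DsetM; apply: mono_D; apply/HI; apply: Hl;
  by rewrite !inE eqxx ?orbT.
Qed.


Definition Ee (e : 'I_n -> nat) : 'I_n -> bool := fun l => (0 < e l)%N.

Lemma irred_ker (e : 'I_n -> nat) f : irred_ideal e f -> kerE (Ee e) f.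
Proof.
apply: gen_min; first exact: kerE_ideal.
move=> g [l Hl ->]; rewrite mpolyXn /kerE sigX; case: ifP => // /forallP /(_ l).
by rewrite /Ee Hl /= mulmnE mnm1E eqxx mul1n; case: (e l) Hl.
Qed.

Lemma rad_irred (e : 'I_n -> nat) f : radical (irred_ideal e) f <-> kerE (Ee e) f.
Proof.
split.
- move=> [k /irred_ker]; rewrite /kerE /sig rmorphXn /= => /eqP.
  rewrite expf_eq0 => /andP [_ /eqP] //.
- move/ker_vars => Hv.
  have Hg : forall a, (fun g => exists2 l, Ee e l & g = ('X_l : S)) a -> exists k, irred_ideal e (a ^+ k).
    move=> a [l Hl ->]; exists (e l); apply: gen_in; exists l; [exact: Hl | done].
  have [k Hk] := rad_gen (irred_ideal_is e) Hg Hv.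
  by exists k.
Qed.

Lemma prime_avoid (I P : S -> Prop) (Qs : seq ('I_n -> nat)) :
  ideal_eq I (fun f => forall k, (k < size Qs)%N -> irred_ideal (nth (fun _ => 0%N) Qs k) f) ->
  is_prime P -> (forall f, I f -> P f) ->
  exists2 k, (k < size Qs)%N & forall f, irred_ideal (nth (fun _ => 0%N) Qs k) f -> P f.
Proof.
move=> HI [HP [P1 Pp]] IP.
apply: NNPP => Hn.
have Hk : forall k, (k < size Qs)%N -> exists q, irred_ideal (nth (fun _ => 0%N) Qs k) q /\ ~ P q.
  move=> k Hk; apply: NNPP => Hq; apply: Hn; exists k => // f Hf.
  by apply: NNPP => Pf; apply: Hq; exists f.
have : forall N, (N <= size Qs)%N -> exists q,
    (forall k, (k < N)%N -> irred_ideal (nth (fun _ => 0%N) Qs k) q) /\ ~ P q.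
  elim=> [|N IH] HN; first by exists 1; split.
  have [q [Hq Pq]] := IH (ltnW HN).
  have [r [Hr Pr]] := Hk N HN.
  exists (q * r); split; last by case/Pp.
  move=> k; rewrite ltnS leq_eqVlt => /orP [/eqP ->|Hlt].
  - by apply: idealM => //; apply: irred_ideal_is.
  - by apply: idealMr => //; [apply: irred_ideal_is | apply: Hq].
move=> /(_ (size Qs) (leqnn _)) [q [Hq Pq]].
by apply: Pq; apply: IP; apply/HI.
Qed.


Lemma seq_min (T : eqType) (s : seq T) (F : T -> nat) : s != [::] ->
  exists2 x, x \in s & forall y, y \in s -> (F x <= F y)%N.
Proof.
elim: s => [//|x s IH] _; case: (eqVneq s [::]) => [->|Hs].
  by exists x; rewrite ?mem_head // => y; rewrite inE => /eqP ->.
have [z Hz Hmin] := IH Hs.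
case: (leqP (F x) (F z)) => Hxz.
- exists x; first exact: mem_head.
  move=> y; rewrite inE => /orP [/eqP ->//|/Hmin]; exact: leq_trans.
- exists z; first by rewrite inE Hz orbT.
  move=> y; rewrite inE => /orP [/eqP ->|/Hmin //]; exact: ltnW.
Qed.

Definition sp2 (i j : 'I_n) (m : 'X_{1..n}) :=
  [/\ (0 < m i)%N, (0 < m j)%N & forall k, k != i -> k != j -> m k = 0%N].

Lemma suppijP (i j : 'I_n) (m : 'X_{1..n}) : i != j ->
  [forall k, (m k != 0%N) == ((k == i) || (k == j))] <-> sp2 i j m.
Proof.
move=> Hij; split.
- move/forallP => H; split.
  + by move: (H i); rewrite eqxx /= lt0n => /eqP ->.
  + by move: (H j); rewrite eqxx orbT lt0n => /eqP ->.
  + by move=> k Hi Hj; move: (H k); rewrite (negbTE Hi) (negbTE Hj) /=; case: (m k).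
- move=> [Hi Hj Ho]; apply/forallP => k.
  case: (eqVneq k i) => [->|Hki]; first by rewrite -lt0n Hi.
  case: (eqVneq k j) => [->|Hkj]; first by rewrite -lt0n Hj.
  by rewrite Ho.
Qed.

Lemma select_uv (G : seq 'X_{1..n}) (i j : 'I_n) : uniq G -> i != j ->
  (forall m m', m \in G -> m' \in G -> m != m' -> ~~ mdivides m m') ->
  (2 <= alpha G i j)%N ->
  exists u v, [/\ u \in G /\ v \in G, sp2 i j u, sp2 i j v, (u i < v i)%N /\ (v j < u j)%N
     & forall g, g \in G -> sp2 i j g -> g != u -> (v i <= g i)%N].
Proof.
move=> Hu Hij Hanti Hal.
set P := fun m : 'X_{1..n} => [forall k, (m k != 0%N) == ((k == i) || (k == j))].
set T := [seq m <- G | P m].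
have HT : size T = alpha G i j by rewrite size_filter.
have uT : uniq T by apply: filter_uniq.
have memT g : g \in T = (g \in G) && P g by rewrite mem_filter andbC.
have [u uin umin] := @seq_min _ T (fun m => m i) (ltac:(by rewrite -size_eq0 HT; case: (alpha G i j) Hal)).
set T' := rem u T.
have HT' : T' != [::] by rewrite -size_eq0 size_rem // HT; case: (alpha G i j) Hal => [|[]].
have [v vin vmin] := @seq_min _ T' (fun m => m i) HT'.
move: vin; rewrite mem_rem_uniq // inE => /andP [vu vT].
move: (uin) (vT); rewrite !memT => /andP [uG /(suppijP _ Hij) us] /andP [vG /(suppijP _ Hij) vs].
have key : forall g, g \in G -> sp2 i j g -> g != u -> (u i < g i)%N /\ (g j < u j)%N.
  move=> g gG gs gu.
  have gT : g \in T by rewrite memT gG; apply/suppijP.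
  have gi := umin _ gT.
  case: us => ui uj uo; case: gs => gi0 gj0 go.
  have gj : (g j < u j)%N.
    rewrite ltnNge; apply/negP => Hj.
    have := Hanti u g uG gG (ltac:(by rewrite eq_sym)); rewrite /mdivides => /negP; apply.
    apply/forallP => k; case: (eqVneq k i) => [->//|Hki]; case: (eqVneq k j) => [->//|Hkj].
    by rewrite uo.
  split => //; rewrite ltn_neqAle gi andbT; apply/negP => /eqP Hi.
  have := Hanti g u gG uG gu; rewrite /mdivides => /negP; apply.
  apply/forallP => k; case: (eqVneq k i) => [->|Hki]; first by rewrite Hi.
  case: (eqVneq k j) => [->|Hkj]; first exact: ltnW.
  by rewrite go.
have [k1 k2] := key v vG vs vu.
exists u, v; split => //.
move=> g gG gs gu; apply: vmin; rewrite mem_rem_uniq // inE gu memT gG /=.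
by apply/suppijP.
Qed.


Lemma sp2_of (G : seq 'X_{1..n}) (i j : 'I_n) g : support2 G -> g \in G ->
  (forall k, k != i -> k != j -> g k = 0%N) -> sp2 i j g.
Proof.
move=> Hs gG Ho; have [i1 [j1 [Hlt [Hi1 [Hj1 Hoth]]]]] := Hs g gG.
have ne : i1 != j1 by rewrite -val_eqE /= neq_ltn Hlt.
have Ai1 : (i1 == i) || (i1 == j).
  case: (boolP (_ || _)) => //; rewrite negb_or => /andP [a b]; by rewrite Ho in Hi1.
have Aj1 : (j1 == i) || (j1 == j).
  case: (boolP (_ || _)) => //; rewrite negb_or => /andP [a b]; by rewrite Ho in Hj1.
split => //.
- case/orP: Ai1 => [/eqP <-//|/eqP E1]; case/orP: Aj1 => [/eqP <-//|/eqP E2].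
  by move: ne; rewrite E1 E2 eqxx.
- case/orP: Aj1 => [/eqP E2|/eqP <-//]; case/orP: Ai1 => [/eqP E1|/eqP <-//].
  by move: ne; rewrite E1 E2 eqxx.
Qed.

Definition fmon (i j : 'I_n) (x y : nat) : 'X_{1..n} := (U_(i) *+ x + U_(j) *+ y)%MM.

Lemma fmonE (i j : 'I_n) x y k : fmon i j x y k = ((i == k) * x + (j == k) * y)%N.
Proof. by rewrite /fmon mnmDE !mulmnE !mnm1E mulnC [X in (_ + X)%N]mulnC. Qed.

Lemma notpow (I : S -> Prop) (G : seq 'X_{1..n}) (i j : 'I_n) (u v : 'X_{1..n}) :
  ideal_eq I (monomial_ideal_of G) -> support2 G -> i != j ->
  u \in G -> sp2 i j u -> sp2 i j v -> (u i < v i)%N /\ (v j < u j)%N ->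
  (forall g, g \in G -> sp2 i j g -> g != u -> (v i <= g i)%N) ->
  ~ ideal_pow I 2 ('X_[fmon i j (u i + v i - 1) (u j + v j - 1)] : S).
Proof.
move=> HI Hs Hij uG [ui uj uo] [vi vj vo] [Hc Hb] Hmin.
move=> /(pow2_D HI) /DsetX_inv [m [m1 [m2 [m1G m2G ->]]] /mnm_lepP Hle].
have Hlei k : (m1 k + m2 k <= fmon i j (u i + v i - 1) (u j + v j - 1) k)%N.
  by have := Hle k; rewrite mnmDE.
have z k : k != i -> k != j -> fmon i j (u i + v i - 1) (u j + v j - 1) k = 0%N.
  by move=> a b; rewrite fmonE eq_sym (negbTE a) eq_sym (negbTE b).
have s1 : sp2 i j m1.
  apply: sp2_of Hs m1G _ => k a b; have := Hlei k; rewrite z //; lia.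
have s2 : sp2 i j m2.
  apply: sp2_of Hs m2G _ => k a b; have := Hlei k; rewrite z //; lia.
have Ii := Hlei i; have Ij := Hlei j.
rewrite fmonE eqxx eq_sym (negbTE Hij) in Ii.
rewrite fmonE eqxx (negbTE Hij) in Ij.
move: Ii Ij; rewrite /= !mul1n !mul0n ?addn0 ?add0n => Ii Ij.
case: (eqVneq m1 u) => [E1|N1]; case: (eqVneq m2 u) => [E2|N2].
- subst; lia.
- have := Hmin _ m2G s2 N2; subst; lia.
- have := Hmin _ m1G s1 N1; subst; lia.
- have := Hmin _ m2G s2 N2; have := Hmin _ m1G s1 N1; lia.
Qed.

End A.

Unset Implicit Arguments.
Theorem lemma2p2 (K : fieldType) (n : nat) (I : {mpoly K[n]} -> Prop)
  (G : seq 'X_{1..n}) (Qs : seq ('I_n -> nat)) :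
  is_min_mon_gens I G ->
  support2 G ->
  minimal_irred_decomp I Qs ->
  (exists i j : 'I_n, i != j /\ (2 <= alpha G i j)%N) ->
  ~ ideal_eq (symbolic_pow I 2) (ideal_pow I 2).
Proof.
move=> [Gu [HI Hanti]] Hs2 [Hdec [_ Hdist]] [i [j [Hij Hal]]].
have [u [v [[uG vG] us vs [Hc Hb] Hmin]]] := select_uv Gu Hij Hanti Hal.
set fm := fmon i j (u i + v i - 1) (u j + v j - 1).
have NP := notpow HI Hs2 Hij uG us vs (conj Hc Hb) Hmin.
suff SY : symbolic_pow I 2 'X_[fm] by move=> Heq; apply: NP; apply/Heq.
move=> P [HP [IP Pmin]].
have [k Hk QP] := prime_avoid Hdec HP IP.
set e := nth (fun _ => 0%N) Qs k in QP.
set E := Ee e.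
have IQ : forall k', (k' < size Qs)%N -> forall f, I f -> irred_ideal (nth (fun _ => 0%N) Qs k') f.
  by move=> k' Hk' f /Hdec; apply.
have PX : forall l, E l -> P 'X_l.
  move=> l El; apply: (@prime_pow _ _ P _ (e l) HP); rewrite mpolyXn; apply: QP; exact: (irred_gen K El).
have HPi : is_ideal P by case: HP.
have varsP : forall (E' : 'I_n -> bool), (forall l, E' l -> E l) -> forall f, kerE E' f -> P f.
  move=> E' HE f /ker_vars; apply: gen_min => //; move=> g [l El ->]; apply: PX; exact: HE.
have Ik : forall f, I f -> kerE E f by move=> f /(IQ k Hk) /irred_ker.
have PeqK : ideal_eq (kerE E) P := Pmin _ (@kerE_prime K n E) Ik (varsP E (fun l h => h)).
have other : forall k', (k' < size Qs)%N -> k' != k ->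
    exists l, Ee (nth (fun _ => 0%N) Qs k') l && ~~ E l.
  move=> k' Hk' Hne; apply: NNPP => Hno.
  have HE : forall l, Ee (nth (fun _ => 0%N) Qs k') l -> E l.
    move=> l H; apply: NNPP => Hn; apply: Hno; exists l; rewrite H; by case: (E l) Hn.
  have Ik' : forall f, I f -> kerE (Ee (nth (fun _ => 0%N) Qs k')) f
    by move=> f /(IQ k' Hk') /irred_ker.
  have PeqK' := Pmin _ (@kerE_prime K n _) Ik' (varsP _ HE).
  apply: (Hdist k' k Hk' Hk Hne) => f.
  rewrite !rad_irred; split => H.
  - by apply/PeqK; apply/PeqK'.
  - by apply/PeqK'; apply/PeqK.
set N := (\sum_(k0 < size Qs) \sum_(l < n) nth (fun _ => 0%N) Qs k0 l)%N.
have HN : forall k0 l, (k0 < size Qs)%N -> (nth (fun _ => 0%N) Qs k0 l <= N)%N.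
  move=> k0 l H; rewrite /N (bigD1 (Ordinal H)) //= (bigD1 l) //=.
  by rewrite -addnA leq_addr.
set hm : 'X_{1..n} := [multinom (if E l then 0%N else N) | l < n].
have hmE l : hm l = if E l then 0%N else N by rewrite mnmE.
have IX : forall l, E l -> I 'X_[U_(l) *+ e l + hm].
  move=> l El; apply/Hdec => k' Hk'.
  case: (eqVneq k' k) => [->|Hne].
  - exact: monX_in (irred_ideal_is K _) (irred_gen K El) (lem_addr _ _).
  - have [l' /andP [E'l' nEl']] := other k' Hk' Hne.
    apply: monX_in (irred_ideal_is K _) (irred_gen K E'l') _.
    apply/mnm_lepP => t; rewrite mnmDE hmE !mulmnE !mnm1E.
    case: (eqVneq l' t) => [<- | H]; last by rewrite mul0n.
    rewrite (negbTE nEl') mul1n; have := HN k' l' Hk'; lia.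
exists ('X_[hm + hm]); split.
- move=> /PeqK /kerX /negP; apply; apply/forallP => l; apply/implyP => El.
  by rewrite mnmDE hmE El.
- rewrite -mpolyXD.
  have pow_in : forall A B, I 'X_[A] -> I 'X_[B] -> (A + B <= hm + hm + fm)%MM ->
      ideal_pow I 2 'X_[hm + hm + fm].
    move=> A B HA HB Hle; apply: monX_in (gen_ideal _) _ Hle; apply: gen_in.
    exists [:: 'X_[A]; 'X_[B]]; split => //; split.
      by move=> a; rewrite !inE => /orP [/eqP->|/eqP->].
    by rewrite big_cons big_seq1 mpolyXD.
  have uQ : irred_ideal e ('X_[u] : {mpoly K[n]}) by apply: (IQ k Hk); apply/HI; apply: gen_in; exists u.
  have vQ : irred_ideal e ('X_[v] : {mpoly K[n]}).
    by apply: (IQ k Hk); apply/HI; apply: gen_in; exists v.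
  have [l1 El1 Hl1] := irred_memX uQ.
  have [l2 El2 Hl2] := irred_memX vQ.
  case: us => ui uj uo; case: vs => vi vj vo.
  have L1 : (l1 == i) || (l1 == j).
    case: (boolP (_ || _)) => //; rewrite negb_or => /andP [a b].
    by move: Hl1; rewrite uo //; case: (e l1) El1.
  have L2 : (l2 == i) || (l2 == j).
    case: (boolP (_ || _)) => //; rewrite negb_or => /andP [a b].
    by move: Hl2; rewrite vo //; case: (e l2) El2.
  have nb t : ~~ ((i == t) && (j == t)).
    by apply/negP => /andP [/eqP a /eqP b]; move: Hij; rewrite a b eqxx.
  case/orP: L1 => /eqP E1; rewrite E1 in El1 Hl1.
  - apply: (pow_in _ _ (IX i El1) (IX i El1)).
    apply/mnm_lepP => t; rewrite !mnmDE !mulmnE !mnm1E.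
    move: (nb t); case: (i == t); case: (j == t) => //= _; lia.
  case/orP: L2 => /eqP E2; rewrite E2 in El2 Hl2.
  - apply: (pow_in _ _ (IX j El1) (IX i El2)).
    apply/mnm_lepP => t; rewrite !mnmDE !mulmnE !mnm1E.
    move: (nb t); case: (i == t); case: (j == t) => //= _; lia.
  - apply: (pow_in _ _ (IX j El2) (IX j El2)).
    apply/mnm_lepP => t; rewrite !mnmDE !mulmnE !mnm1E.
    move: (nb t); case: (i == t); case: (j == t) => //= _; lia.
Qed.
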